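(* Let $n=2^{n_1}3^{n_2}$ for some natural numbers $n_1,n_2$. In the one counter net $\mathcal{M}$ described in the context, Defender has a winning strategy in the branching bisimulation game starting from $(p_jX^{3n},p_j'X^{3n})$ if and only if Defender has a winning strategy in the branching bisimulation game starting from $(p_iX^{n},p_i'X^{n})$.
   Context: One counter nets: a tuple $(\mathcal{Q},X,\mathcal{A},\Delta)$ with finite state set $\mathcal{Q}$, place $X$, finite action set $\mathcal{A}\ni\tau$ ($\tau$ silent), and rules $pX^{i}\stackrel{\ell}{\longrightarrow}qX^{j}$ with $i\in\{0,1\}$, $j\ge0$; processes are $pX^{m}$; semantics $pX^{i+k}\stackrel{\ell}{\longrightarrow}qX^{j+k}$ for all $k\ge0$ whenever $pX^{i}\stackrel{\ell}{\longrightarrow}qX^{j}$ is a rule (a rule written $p\stackrel{\ell}{\longrightarrow}q$ means $i=j=0$). Write $\Longrightarrow$ for the reflexive transitive closure of $\stackrel{\tau}{\longrightarrow}$. Branching bisimilarity $\simeq$ is the largest relation $\mathcal{B}$ such that whenever $P\mathcal{B}Q$ and $P\stackrel{\ell}{\longrightarrow}P'$, either $Q\Longrightarrow Q''\stackrel{\ell}{\longrightarrow}Q'$ with $P\mathcal{B}Q''$ and $P'\mathcal{B}Q'$, or $\ell=\tau$ and $P'\mathcal{B}Q$; and symmetrically. The branching bisimulation game on a configuration $(P_0,P_1)$ is played in rounds by Attacker and Defender: Attacker picks $k\in\{0,1\}$ and a move $P_k\stackrel{\ell}{\longrightarrow}P_k'$; Defender either picks $P_{1-k}\Longrightarrow P_{1-k}''\stackrel{\ell}{\longrightarrow}P_{1-k}'$,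 after which Attacker chooses the next configuration among $(P_k,P_{1-k}'')$ and $(P_k',P_{1-k}')$, or (only if $\ell=\tau$) does nothing, and the next configuration is $(P_k',P_{1-k})$. Defender wins if it never gets stuck. Defender has a winning strategy from $(P,Q)$ iff $P\simeq Q$. The net $\mathcal{M}$: it has actions $a,t,c,\tau$ (among possibly others) and states $p_i,p_i',G',G,q_1,q_2,q_3,q_1',q_2',q_3',t_1,t_3,t',t''$, together with states $p_j,p_j'$ distinct from these, and contains the rules $p_i\stackrel{\tau}{\longrightarrow}G'$, $p_i'\stackrel{\tau}{\longrightarrow}G'$, $p_i\stackrel{a}{\longrightarrow}q_1$, $G'\stackrel{a}{\longrightarrow}q_1'$, $G'\stackrel{\tau}{\longrightarrow}G'X$, $G'X\stackrel{\tau}{\longrightarrow}G'$; $q_1\stackrel{a}{\longrightarrow}q_2$, $q_1'\stackrel{a}{\longrightarrow}q_2'$, $q_1\stackrel{t}{\longrightarrow}t_3$, $q_1'\stackrel{t}{\longrightarrow}t_1$; $q_2\stackrel{\tau}{\longrightarrow}G$, $q_2'\stackrel{\tau}{\longrightarrow}G$, $G\stackrel{\tau}{\longrightarrow}GX$, $GX\stackrel{\tau}{\longrightarrow}G$, $G\stackrel{a}{\longrightarrow}q_3$, $q_2'\stackrel{a}{\longrightarrow}q_3'$; $q_3\stackrel{a}{\longrightarrow}p_j$, $q_3'\stackrel{a}{\longrightarrow}p_j'$, $q_3\stackrel{t}{\longrightarrow}t_1$, $q_3'\stackrel{t}{\longrightarrow}t_1$; $t_3X\stackrel{c}{\longrightarrow}t''X$,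 $t''X\stackrel{c}{\longrightarrow}t'X$, $t'X\stackrel{c}{\longrightarrow}t_3$, $t_1X\stackrel{c}{\longrightarrow}t_1$. There are no other rules from the states $p_i,p_i',G',G,q_1,q_2,q_3,q_1',q_2',q_3',t_1,t_3,t',t''$; the rules from $p_j,p_j'$ are arbitrary. (This gadget encodes a Minsky machine instruction ''$i$: $c_2:=c_2+1$; goto $j$'' on the counter value $2^{n_1}3^{n_2}$.) *)

(* Defs.v *)
From mathcomp Require Import all_boot.
Set Implicit Arguments. Unset Strict Implicit. Unset Printing Implicit Defensive.

(* A rule (p, b, l, q, j) stands for  p X^i --l--> q X^j  with i = (b : nat),
   i.e. b = false means i = 0 and b = true means i = 1. *)
Record ocn := OCN {
  St : finType;
  Act : finType;
  tau : Act;
  rules : seq (St * bool * Act * St * nat)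
}.

(* processes p X^m *)
Definition proc (N : ocn) : Type := (St N * nat)%type.

Definition step (N : ocn) (P : proc N) (l : Act N) (P' : proc N) : Prop :=
  exists (i : bool) (j k : nat),
    (P.1, i, l, P'.1, j) \in rules N /\ P.2 = (i : nat) + k /\ P'.2 = j + k.

Inductive tau_star (N : ocn) : proc N -> proc N -> Prop :=
| ts_refl P : tau_star P P
| ts_step P P1 P2 : step P (tau N) P1 -> tau_star P1 P2 -> tau_star P P2.

Definition bb_transfer (N : ocn) (B : proc N -> proc N -> Prop) : Prop :=
  forall P Q, B P Q -> forall l P', step P l P' ->
    (exists Q'' Q', tau_star Q Q'' /\ step Q'' l Q' /\ B P Q'' /\ B P' Q')
    \/ (l = tau N /\ B P' Q).

Definition branching_bisimulation (N : ocn) (B : proc N -> proc N -> Prop) :=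
  bb_transfer B /\ bb_transfer (fun P Q => B Q P).

Definition bbisim (N : ocn) (P Q : proc N) : Prop :=
  exists B, branching_bisimulation B /\ B P Q.

(* The rules of the gadget for "i: c2 := c2+1; goto j" *)
Definition gadget_rules (N : ocn) (a t c : Act N)
  (pi pi' G' G q1 q2 q3 q1' q2' q3' t1 t3 t' t'' pj pj' : St N)
  : seq (St N * bool * Act N * St N * nat) :=
  [:: (pi, false, tau N, G', 0); (pi', false, tau N, G', 0);
      (pi, false, a, q1, 0); (G', false, a, q1', 0);
      (G', false, tau N, G', 1); (G', true, tau N, G', 0);
      (q1, false, a, q2, 0); (q1', false, a, q2', 0);
      (q1, false, t, t3, 0); (q1', false, t, t1, 0);
      (q2, false, tau N, G, 0); (q2', false, tau N, G, 0);
      (G, false, tau N, G, 1); (G, true, tau N, G, 0);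
      (G, false, a, q3, 0); (q2', false, a, q3', 0);
      (q3, false, a, pj, 0); (q3', false, a, pj', 0);
      (q3, false, t, t1, 0); (q3', false, t, t1, 0);
      (t3, true, c, t'', 1); (t'', true, c, t', 1);
      (t', true, c, t3, 0); (t1, true, c, t1, 0)].

(* Main.v *)
Require Import Defs.
From mathcomp Require Import all_boot.
Set Implicit Arguments. Unset Strict Implicit. Unset Printing Implicit Defensive.

Definition code (T : eqType) (L : seq T) (x : T) : nat := index x L.
Arguments code : simpl never.

Lemma decode (T : eqType) (L : seq T) x0 x k :
  code L x = k -> k < size L -> x = nth x0 L k.
Proof. by rewrite /code => <- H; rewrite nth_index // -index_mem. Qed.

Fixpoint chain (N : ocn) (c : Act N) (P : proc N) (d : nat) : Prop :=
  match d with
  | 0 => forall l P', ~ step P l P'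
  | d'.+1 => (exists P', step P c P') /\
             forall l P', step P l P' -> l = c /\ chain c P' d'
  end.

Lemma chain_tau (N : ocn) (c : Act N) P d Q :
  c <> tau N -> chain c P d -> tau_star P Q -> Q = P.
Proof.
move=> hc H ts; case: ts H => // P0 P1 P2 hs _.
case: d => [|d] /= H.
- by case: (H _ _ hs).
- by case: (H.2 _ _ hs) => /esym.
Qed.

Lemma chain_eq (N : ocn) (c : Act N) B : c <> tau N ->
  branching_bisimulation B ->
  forall d1 P Q d2, B P Q -> chain c P d1 -> chain c Q d2 -> d1 = d2.
Proof.
move=> hc [BL BR]; elim=> [|d1 IH] P Q [|d2] //= hB hP hQ.
- case: hQ => [[Q' hs] _].
  case: (BR Q P hB c Q' hs) => [[P'' [P' [ts [st _]]]]|[//]].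
  by rewrite (chain_tau (d:=0) hc hP ts) in st; case: (hP _ _ st).
- case: hP => [[P' hs] _].
  case: (BL P Q hB c P' hs) => [[Q'' [Q' [ts [st _]]]]|[//]].
  by rewrite (chain_tau (d:=0) hc hQ ts) in st; case: (hQ _ _ st).
- case: hP => [[P' hs] hP].
  case: (BL P Q hB c P' hs) => [[Q'' [Q' [ts [st [_ hB']]]]]|[//]].
  have E := chain_tau (d:=d2.+1) hc hQ ts. rewrite E in st.
  have [_ hQ'] := hQ.2 _ _ st. have [_ hP'] := hP _ _ hs.
  by rewrite (IH _ _ _ hB' hP' hQ').
Qed.

Lemma tau_star_inv (N : ocn) (S : proc N -> Prop) P Q :
  tau_star P Q -> S P -> (forall X Y, S X -> step X (tau N) Y -> S Y) -> S Q.
Proof. by elim=> // P0 P1 P2 hs _ IH HS HC; apply: IH => //; exact: HC hs. Qed.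

Lemma tau_star_trans (N : ocn) (P Q R : proc N) :
  tau_star P Q -> tau_star Q R -> tau_star P R.
Proof. by elim=> // P0 P1 P2 hs _ IH /IH; apply: ts_step. Qed.

Ltac fin_atom := split; [reflexivity | first [reflexivity | eexists; split; reflexivity]].
Ltac fin := solve [ repeat (first [ solve [left; fin_atom] | right ]); fin_atom ].
Ltac dec := move=> /andP[/andP[/andP[/eqP-> /eqP/dA/(_ isT)->] /eqP/dS/(_ isT)->] /eqP->] /=; fin.

Ltac atom := first [ assumption | reflexivity
  | (split; [reflexivity | first [reflexivity | by left | by right]])
  | (eexists; split; eassumption) ].
Ltac sdis := repeat (first [solve [left; atom] | right]); atom.
Ltac rr := hnf; solve [left; hnf; sdis | right; hnf; sdis].
Ltac L2 X Y := left; exists X, Y; split; [|split; [|split]].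

Theorem lemma3 (N : ocn) (a t c : Act N)
  (pi pi' G' G q1 q2 q3 q1' q2' q3' t1 t3 t' t'' pj pj' : St N)
  (n1 n2 : nat) :
  uniq [:: tau N; a; t; c] ->
  uniq [:: pi; pi'; G'; G; q1; q2; q3; q1'; q2'; q3'; t1; t3; t'; t''; pj; pj'] ->
  (* M contains the gadget rules *)
  {subset gadget_rules a t c pi pi' G' G q1 q2 q3 q1' q2' q3' t1 t3 t' t'' pj pj'
     <= rules N} ->
  (* and has no other rules from the 14 gadget states *)
  (forall r, r \in rules N ->
     r.1.1.1.1 \in [:: pi; pi'; G'; G; q1; q2; q3; q1'; q2'; q3'; t1; t3; t'; t''] ->
     r \in gadget_rules a t c pi pi' G' G q1 q2 q3 q1' q2' q3' t1 t3 t' t'' pj pj') ->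
  let n := 2 ^ n1 * 3 ^ n2 in
  bbisim (pj, 3 * n) (pj', 3 * n) <-> bbisim (pi, n) (pi', n).
Proof.
move=> HA HS Hsub Honly n.
set LA := [:: tau N; a; t; c].
set L := [:: pi; pi'; G'; G; q1; q2; q3; q1'; q2'; q3'; t1; t3; t'; t''; pj; pj'].
have cA : forall i, i < 4 -> code LA (nth a LA i) = i by move=> i hi; exact: index_uniq.
have cS : forall i, i < 16 -> code L (nth pi L i) = i by move=> i hi; exact: index_uniq.
have ctau : code LA (tau N) = 0 := cA 0 erefl.
have ca : code LA a = 1 := cA 1 erefl.
have ct : code LA t = 2 := cA 2 erefl.
have cc : code LA c = 3 := cA 3 erefl.
have cpi : code L pi = 0 := cS 0 erefl.
have cpi' : code L pi' = 1 := cS 1 erefl.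
have cG' : code L G' = 2 := cS 2 erefl.
have cG : code L G = 3 := cS 3 erefl.
have cq1 : code L q1 = 4 := cS 4 erefl.
have cq2 : code L q2 = 5 := cS 5 erefl.
have cq3 : code L q3 = 6 := cS 6 erefl.
have cq1' : code L q1' = 7 := cS 7 erefl.
have cq2' : code L q2' = 8 := cS 8 erefl.
have cq3' : code L q3' = 9 := cS 9 erefl.
have ct1 : code L t1 = 10 := cS 10 erefl.
have ct3 : code L t3 = 11 := cS 11 erefl.
have ct' : code L t' = 12 := cS 12 erefl.
have ct'' : code L t'' = 13 := cS 13 erefl.
have cpj : code L pj = 14 := cS 14 erefl.
have cpj' : code L pj' = 15 := cS 15 erefl.
have Hinv : forall s m l q m', step (s, m) l (q, m') ->
  s \in [:: pi; pi'; G'; G; q1; q2; q3; q1'; q2'; q3'; t1; t3; t'; t''] ->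
  exists (i : bool) j k, (code L s, i, code LA l, code L q, j) \in
   [:: (0,false,0,2,0); (1,false,0,2,0); (0,false,1,4,0); (2,false,1,7,0);
       (2,false,0,2,1); (2,true,0,2,0); (4,false,1,5,0); (7,false,1,8,0);
       (4,false,2,11,0); (7,false,2,10,0); (5,false,0,3,0); (8,false,0,3,0);
       (3,false,0,3,1); (3,true,0,3,0); (3,false,1,6,0); (8,false,1,9,0);
       (6,false,1,14,0); (9,false,1,15,0); (6,false,2,10,0); (9,false,2,10,0);
       (11,true,3,13,1); (13,true,3,12,1); (12,true,3,11,0); (10,true,3,10,0)]
   /\ m = i + k /\ m' = j + k.
  move=> s m l q m' [i [j [k [hr [h1 h2]]]]] hs.
  exists i, j, k; split=> //.
  have := Honly _ hr hs.
  move/(map_f (fun r : St N * bool * Act N * St N * nat =>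
     (code L r.1.1.1.1, r.1.1.1.2, code LA r.1.1.2, code L r.1.2, r.2))).
  by rewrite /gadget_rules /= ctau ca ct cc cpi cpi' cG' cG cq1 cq2 cq3 cq1' cq2' cq3' ct1 ct3 ct' ct'' cpj cpj'.
have dA : forall l k, code LA l = k -> k < 4 -> l = nth a LA k.
  by move=> l k h hk; apply: decode.
have dS : forall s k, code L s = k -> k < 16 -> s = nth pi L k.
  by move=> s k h hk; apply: decode.
have inv_pi : forall m l P', step (pi, m) l P' -> (l = tau N /\ P' = (G',m)) \/ (l = a /\ P' = (q1,m)).
  move=> m l [q m'] H.
  have := Hinv _ _ _ _ _ H ltac:(by rewrite !inE eqxx ?orbT).
  rewrite cpi => -[i [j [k [+ [-> ->]]]]].
  rewrite !inE !xpair_eqE /=.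
  by repeat (case/orP; [dec|]); try dec.
have inv_pi' : forall m l P', step (pi', m) l P' -> l = tau N /\ P' = (G',m).
  move=> m l [q m'] H.
  have := Hinv _ _ _ _ _ H ltac:(by rewrite !inE eqxx ?orbT).
  rewrite cpi' => -[i [j [k [+ [-> ->]]]]].
  rewrite !inE !xpair_eqE /=.
  by repeat (case/orP; [dec|]); try dec.
have inv_G' : forall m l P', step (G', m) l P' -> (l = a /\ P' = (q1',m)) \/ (l = tau N /\ P' = (G',m.+1)) \/ (l = tau N /\ exists k, m = k.+1 /\ P' = (G',k)).
  move=> m l [q m'] H.
  have := Hinv _ _ _ _ _ H ltac:(by rewrite !inE eqxx ?orbT).
  rewrite cG' => -[i [j [k [+ [-> ->]]]]].
  rewrite !inE !xpair_eqE /=.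
  by repeat (case/orP; [dec|]); try dec.
have inv_G : forall m l P', step (G, m) l P' -> (l = tau N /\ P' = (G,m.+1)) \/ (l = tau N /\ exists k, m = k.+1 /\ P' = (G,k)) \/ (l = a /\ P' = (q3,m)).
  move=> m l [q m'] H.
  have := Hinv _ _ _ _ _ H ltac:(by rewrite !inE eqxx ?orbT).
  rewrite cG => -[i [j [k [+ [-> ->]]]]].
  rewrite !inE !xpair_eqE /=.
  by repeat (case/orP; [dec|]); try dec.
have inv_q1 : forall m l P', step (q1, m) l P' -> (l = a /\ P' = (q2,m)) \/ (l = t /\ P' = (t3,m)).
  move=> m l [q m'] H.
  have := Hinv _ _ _ _ _ H ltac:(by rewrite !inE eqxx ?orbT).
  rewrite cq1 => -[i [j [k [+ [-> ->]]]]].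
  rewrite !inE !xpair_eqE /=.
  by repeat (case/orP; [dec|]); try dec.
have inv_q1' : forall m l P', step (q1', m) l P' -> (l = a /\ P' = (q2',m)) \/ (l = t /\ P' = (t1,m)).
  move=> m l [q m'] H.
  have := Hinv _ _ _ _ _ H ltac:(by rewrite !inE eqxx ?orbT).
  rewrite cq1' => -[i [j [k [+ [-> ->]]]]].
  rewrite !inE !xpair_eqE /=.
  by repeat (case/orP; [dec|]); try dec.
have inv_q2 : forall m l P', step (q2, m) l P' -> l = tau N /\ P' = (G,m).
  move=> m l [q m'] H.
  have := Hinv _ _ _ _ _ H ltac:(by rewrite !inE eqxx ?orbT).
  rewrite cq2 => -[i [j [k [+ [-> ->]]]]].
  rewrite !inE !xpair_eqE /=.
  by repeat (case/orP; [dec|]); try dec.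
have inv_q2' : forall m l P', step (q2', m) l P' -> (l = tau N /\ P' = (G,m)) \/ (l = a /\ P' = (q3',m)).
  move=> m l [q m'] H.
  have := Hinv _ _ _ _ _ H ltac:(by rewrite !inE eqxx ?orbT).
  rewrite cq2' => -[i [j [k [+ [-> ->]]]]].
  rewrite !inE !xpair_eqE /=.
  by repeat (case/orP; [dec|]); try dec.
have inv_q3 : forall m l P', step (q3, m) l P' -> (l = a /\ P' = (pj,m)) \/ (l = t /\ P' = (t1,m)).
  move=> m l [q m'] H.
  have := Hinv _ _ _ _ _ H ltac:(by rewrite !inE eqxx ?orbT).
  rewrite cq3 => -[i [j [k [+ [-> ->]]]]].
  rewrite !inE !xpair_eqE /=.
  by repeat (case/orP; [dec|]); try dec.
have inv_q3' : forall m l P', step (q3', m) l P' -> (l = a /\ P' = (pj',m)) \/ (l = t /\ P' = (t1,m)).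
  move=> m l [q m'] H.
  have := Hinv _ _ _ _ _ H ltac:(by rewrite !inE eqxx ?orbT).
  rewrite cq3' => -[i [j [k [+ [-> ->]]]]].
  rewrite !inE !xpair_eqE /=.
  by repeat (case/orP; [dec|]); try dec.
have inv_t1 : forall m l P', step (t1, m) l P' -> l = c /\ exists k, m = k.+1 /\ P' = (t1,k).
  move=> m l [q m'] H.
  have := Hinv _ _ _ _ _ H ltac:(by rewrite !inE eqxx ?orbT).
  rewrite ct1 => -[i [j [k [+ [-> ->]]]]].
  rewrite !inE !xpair_eqE /=.
  by repeat (case/orP; [dec|]); try dec.
have inv_t3 : forall m l P', step (t3, m) l P' -> l = c /\ exists k, m = k.+1 /\ P' = (t'',m).
  move=> m l [q m'] H.
  have := Hinv _ _ _ _ _ H ltac:(by rewrite !inE eqxx ?orbT).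
  rewrite ct3 => -[i [j [k [+ [-> ->]]]]].
  rewrite !inE !xpair_eqE /=.
  by repeat (case/orP; [dec|]); try dec.
have inv_t'' : forall m l P', step (t'', m) l P' -> l = c /\ exists k, m = k.+1 /\ P' = (t',m).
  move=> m l [q m'] H.
  have := Hinv _ _ _ _ _ H ltac:(by rewrite !inE eqxx ?orbT).
  rewrite ct'' => -[i [j [k [+ [-> ->]]]]].
  rewrite !inE !xpair_eqE /=.
  by repeat (case/orP; [dec|]); try dec.
have inv_t' : forall m l P', step (t', m) l P' -> l = c /\ exists k, m = k.+1 /\ P' = (t3,k).
  move=> m l [q m'] H.
  have := Hinv _ _ _ _ _ H ltac:(by rewrite !inE eqxx ?orbT).
  rewrite ct' => -[i [j [k [+ [-> ->]]]]].
  rewrite !inE !xpair_eqE /=.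
  by repeat (case/orP; [dec|]); try dec.
have dist : forall x y, code LA x <> code LA y -> x <> y by move=> x y h E; apply: h; rewrite E.
have tna : a <> tau N by apply: dist; rewrite ca ctau.
have tnt : t <> tau N by apply: dist; rewrite ct ctau.
have tnc : c <> tau N by apply: dist; rewrite cc ctau.
have ant : a <> t by apply: dist; rewrite ca ct.
have anc : a <> c by apply: dist; rewrite ca cc.
have tc : t <> c by apply: dist; rewrite ct cc.
have mk : forall s (i : bool) l q j k,
    (s, i, l, q, j) \in gadget_rules a t c pi pi' G' G q1 q2 q3 q1' q2' q3' t1 t3 t' t'' pj pj' ->
    step (s, i + k) l (q, j + k).
  by move=> s i l q j k h; exists i, j, k; split => //; apply: Hsub.
Ltac mem := rewrite /gadget_rules !inE eqxx ?orbT.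
have sPiT : forall m, step (pi, m) (tau N) (G', m) by move=> m; apply: (mk pi false (tau N) G' 0 m); mem.
have sPi'T : forall m, step (pi', m) (tau N) (G', m) by move=> m; apply: (mk pi' false (tau N) G' 0 m); mem.
have sPiA : forall m, step (pi, m) a (q1, m) by move=> m; apply: (mk pi false a q1 0 m); mem.
have sG'u : forall m, step (G', m) (tau N) (G', m.+1) by move=> m; apply: (mk G' false (tau N) G' 1 m); mem.
have sG'd : forall m, step (G', m.+1) (tau N) (G', m) by move=> m; apply: (mk G' true (tau N) G' 0 m); mem.
have sG'A : forall m, step (G', m) a (q1', m) by move=> m; apply: (mk G' false a q1' 0 m); mem.
have sq1A : forall m, step (q1, m) a (q2, m) by move=> m; apply: (mk q1 false a q2 0 m); mem.
have sq1'A : forall m, step (q1', m) a (q2', m) by move=> m; apply: (mk q1' false a q2' 0 m); mem.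
have sq1T : forall m, step (q1, m) t (t3, m) by move=> m; apply: (mk q1 false t t3 0 m); mem.
have sq1'T : forall m, step (q1', m) t (t1, m) by move=> m; apply: (mk q1' false t t1 0 m); mem.
have sq2T : forall m, step (q2, m) (tau N) (G, m) by move=> m; apply: (mk q2 false (tau N) G 0 m); mem.
have sq2'T : forall m, step (q2', m) (tau N) (G, m) by move=> m; apply: (mk q2' false (tau N) G 0 m); mem.
have sGu : forall m, step (G, m) (tau N) (G, m.+1) by move=> m; apply: (mk G false (tau N) G 1 m); mem.
have sGd : forall m, step (G, m.+1) (tau N) (G, m) by move=> m; apply: (mk G true (tau N) G 0 m); mem.
have sGA : forall m, step (G, m) a (q3, m) by move=> m; apply: (mk G false a q3 0 m); mem.
have sq2'A : forall m, step (q2', m) a (q3', m) by move=> m; apply: (mk q2' false a q3' 0 m); mem.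
have sq3A : forall m, step (q3, m) a (pj, m) by move=> m; apply: (mk q3 false a pj 0 m); mem.
have sq3'A : forall m, step (q3', m) a (pj', m) by move=> m; apply: (mk q3' false a pj' 0 m); mem.
have sq3T : forall m, step (q3, m) t (t1, m) by move=> m; apply: (mk q3 false t t1 0 m); mem.
have sq3'T : forall m, step (q3', m) t (t1, m) by move=> m; apply: (mk q3' false t t1 0 m); mem.
have st3 : forall m, step (t3, m.+1) c (t'', m.+1) by move=> m; apply: (mk t3 true c t'' 1 m); mem.
have st'' : forall m, step (t'', m.+1) c (t', m.+1) by move=> m; apply: (mk t'' true c t' 1 m); mem.
have st' : forall m, step (t', m.+1) c (t3, m) by move=> m; apply: (mk t' true c t3 0 m); mem.
have st1 : forall m, step (t1, m.+1) c (t1, m) by move=> m; apply: (mk t1 true c t1 0 m); mem.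
have tsS : forall s, (forall m, step (s, m) (tau N) (s, m.+1)) ->
    (forall m, step (s, m.+1) (tau N) (s, m)) -> forall k k', tau_star (s, k) (s, k').
  move=> s hu hd k k'; case: (leqP k k') => h.
    rewrite -(subnKC h); elim: (k' - k) => [|d IH]; first by rewrite addn0; exact: ts_refl.
    apply: (tau_star_trans IH); rewrite addnS; exact: ts_step (hu _) (ts_refl _).
  rewrite -(subnKC (ltnW h)); elim: (k - k') => [|d IH]; first by rewrite addn0; exact: ts_refl.
  rewrite addnS; exact: ts_step (hd _) IH.
have tsG' := tsS _ sG'u sG'd.
have tsG := tsS _ sGu sGd.
have ch_t1 : forall k, chain c (t1, k) k.
  elim=> [|k IH] /=; first by move=> l P' /inv_t1 [_ [k0 [E _]]].
  split; first by exists (t1, k).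
  by move=> l P' /inv_t1 [-> [k0 [[<-] ->]]].
have ch_t3 : forall m, chain c (t3, m) (3 * m).
  elim=> [|m IH]; first by move=> l P' /inv_t3 [_ [k0 [E _]]].
  have -> : 3 * m.+1 = (3 * m).+3 by rewrite mulnS.
  split; first by exists (t'', m.+1).
  move=> l P' /inv_t3 [-> [_ [_ ->]]]; split=> //.
  split; first by exists (t', m.+1).
  move=> l' P'' /inv_t'' [-> [_ [_ ->]]]; split=> //.
  split; first by exists (t3, m).
  by move=> l'' P3 /inv_t' [-> [k0 [[<-] ->]]].
have notau : forall P, (forall P', ~ step P (tau N) P') -> forall Q, tau_star P Q -> Q = P.
  move=> P h Q ts; case: ts h => // P0 P1 P2 hs _ h; by case: (h _ hs).
have nt_q1' : forall m Q, tau_star (q1', m) Q -> Q = (q1', m).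
  by move=> m; apply: notau => P' /inv_q1' [[E _]|[E _]]; congruence.
have nt_q3 : forall m Q, tau_star (q3, m) Q -> Q = (q3, m).
  by move=> m; apply: notau => P' /inv_q3 [[E _]|[E _]]; congruence.
have nt_q3' : forall m Q, tau_star (q3', m) Q -> Q = (q3', m).
  by move=> m; apply: notau => P' /inv_q3' [[E _]|[E _]]; congruence.
split; last first.
  move=> [B [[BL BR] hB]]; exists B; split; first by split.
  have BB : branching_bisimulation B by split.
  have [[Q1 [Q1' [ts1 [st1' [_ h1]]]]]|[E _]] := BL _ _ hB _ _ (sPiA n); last by congruence.
  have : Q1 = (pi', n) \/ Q1.1 = G'.
    apply: (tau_star_inv (S := fun Q => Q = (pi', n) \/ Q.1 = G') ts1); first by left.
    move=> [x0 m0] Y [[-> ->]|/= ->].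
      by move/inv_pi' => [_ ->]; right.
    by case/inv_G' => [[E _]|[[_ ->]|[_ [k [_ ->]]]]]; [congruence|right|right].
  case=> [E1|]; first by rewrite E1 in st1'; case/inv_pi': st1' => E _; congruence.
  case: Q1 ts1 st1' => s k ts1 st1' /= Es; rewrite Es in st1'.
  case/inv_G': st1' => [[_ E1]|[[E _]|[E _]]]; last 2 first; try congruence.
  rewrite E1 in h1.
  have [[Q2 [Q2' [ts2 [st2 [_ h2]]]]]|[E _]] := BL _ _ h1 _ _ (sq1T n); last by congruence.
  rewrite (nt_q1' _ _ ts2) in st2.
  case/inv_q1': st2 => [[E _]|[_ E2]]; first by congruence.
  rewrite E2 in h2.
  have ek := chain_eq tnc BB h2 (ch_t3 n) (ch_t1 k); subst k.
  have [[Q3 [Q3' [ts3 [st3' [_ h3]]]]]|[E _]] := BL _ _ h1 _ _ (sq1A n); last by congruence.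
  rewrite (nt_q1' _ _ ts3) in st3'.
  case/inv_q1': st3' => [[_ E3]|[E _]]; last by congruence.
  rewrite E3 in h3.
  have [[Q4 [Q4' [ts4 [st4 [_ h4]]]]]|[E _]] := BR _ _ h3 _ _ (sq2'A (3 * n)); last by congruence.
  have : Q4 = (q2, n) \/ Q4.1 = G.
    apply: (tau_star_inv (S := fun Q => Q = (q2, n) \/ Q.1 = G) ts4); first by left.
    move=> [x0 m0] Y [[-> ->]|/= ->].
      by move/inv_q2 => [_ ->]; right.
    by case/inv_G => [[_ ->]|[[_ [k [_ ->]]]|[E _]]]; [right|right|congruence].
  case=> [E4|]; first by rewrite E4 in st4; case/inv_q2: st4 => E _; congruence.
  case: Q4 ts4 st4 h4 => s4 k ts4 st4 h4 /= Es4; rewrite Es4 in st4.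
  case/inv_G: st4 => [[E _]|[[E _]|[_ E4]]]; try congruence.
  rewrite E4 /= in h4.
  have [[Q5 [Q5' [ts5 [st5 [_ h5]]]]]|[E _]] := BR _ _ h4 _ _ (sq3'T (3 * n)); last by congruence.
  rewrite (nt_q3 _ _ ts5) in st5.
  case/inv_q3: st5 => [[E _]|[_ E5]]; first by congruence.
  rewrite E5 /= in h5.
  have ek := chain_eq tnc BB h5 (ch_t1 k) (ch_t1 (3 * n)); subst k.
  have [[Q6 [Q6' [ts6 [st6 [_ h6]]]]]|[E _]] := BL _ _ h4 _ _ (sq3A (3 * n)); last by congruence.
  rewrite (nt_q3' _ _ ts6) in st6.
  case/inv_q3': st6 => [[_ E6]|[E _]]; last by congruence.
  by rewrite E6 in h6.
move=> [B0 [[BL0 BR0] hB0]].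
have c3 := ch_t3 n. have c1 := ch_t1 (3 * n).
pose S := fun P Q : proc N => B0 P Q \/ P = Q \/ (exists d, chain c P d /\ chain c Q d)
  \/ (P = (pi, n) /\ (Q = (pi', n) \/ Q.1 = G')) \/ (P = (pi', n) /\ Q.1 = G')
  \/ (P.1 = G' /\ Q.1 = G') \/ (P = (q1, n) /\ Q = (q1', 3 * n))
  \/ (P = (q2, n) /\ (Q = (q2', 3 * n) \/ Q.1 = G)) \/ (P = (q2', 3 * n) /\ Q.1 = G)
  \/ (P.1 = G /\ Q.1 = G) \/ (P = (q3, 3 * n) /\ Q = (q3', 3 * n)).
pose R := fun P Q => S P Q \/ S Q P.
have Rsym : forall X Y, R X Y -> R Y X by move=> X Y [h|h]; [right|left].
have TL : forall P Q, S P Q -> forall l P', step P l P' ->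
   (exists Q'' Q', tau_star Q Q'' /\ step Q'' l Q' /\ R P Q'' /\ R P' Q') \/ (l = tau N /\ R P' Q).
  move=> [x k] [y k'] hS0 l P'; move: hS0; rewrite /S.
  case=> [hB|[E|[[d [hP hQ]]|[[[-> ->] HQ]|[[[-> ->] /= ->]|[[/= -> /= ->]|[[[-> ->] [-> ->]]|[[[-> ->] HQ]|[[[-> ->] /= ->]|[[/= -> /= ->]|[[-> ->] [-> ->]]]]]]]]]]]]; move=> hs.
  - have [[Q'' [Q' [a1 [a2 [a3 a4]]]]]|[a1 a2]] := BL0 _ _ hB _ _ hs.
      by L2 Q'' Q'; [exact a1|exact a2|rr|rr].
    by right; split=> //; rr.
  - rewrite -E; L2 (x, k) P'; [exact: ts_refl|exact: hs|rr|rr].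
  - case: d hP hQ => [|d] hP hQ; first by case: (hP _ _ hs).
    have hQ0 := hQ; have hP0 := hP.
    have [El hP'] := hP.2 _ _ hs; subst l.
    case: hQ => [[Q' hq] hQ]; have [_ hQ'] := hQ _ _ hq.
    L2 (y, k') Q'; [exact: ts_refl|exact: hq|rr|rr].
  - case: HQ => [[-> ->]| /= ->]; case/inv_pi: hs => [[-> ->]|[-> ->]].
    + by right; split=> //; rr.
    + L2 (G', 3 * n) (q1', 3 * n); [exact: ts_step (sPi'T n) (tsG' n (3 * n))|exact: sG'A|rr|rr].
    + by right; split=> //; rr.
    + L2 (G', 3 * n) (q1', 3 * n); [exact: tsG'|exact: sG'A|rr|rr].
  - case/inv_pi': hs => [-> ->]; by right; split=> //; rr.
  - case/inv_G': hs => [[-> ->]|[[-> ->]|[-> [k0 [_ ->]]]]].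
    + L2 (G', k) (q1', k); [exact: tsG'|exact: sG'A|rr|rr].
    + by right; split=> //; rr.
    + by right; split=> //; rr.
  - case/inv_q1: hs => [[-> ->]|[-> ->]].
    + L2 (q1', 3 * n) (q2', 3 * n); [exact: ts_refl|exact: sq1'A|rr|rr].
    + L2 (q1', 3 * n) (t1, 3 * n); [exact: ts_refl|exact: sq1'T|rr|rr].
  - case: HQ => [[-> ->]| /= ->]; case/inv_q2: hs => [-> ->]; by right; split=> //; rr.
  - case/inv_q2': hs => [[-> ->]|[-> ->]].
    + by right; split=> //; rr.
    + L2 (G, 3 * n) (q3, 3 * n); [exact: tsG|exact: sGA|rr|rr].
  - case/inv_G: hs => [[-> ->]|[[-> [k0 [_ ->]]]|[-> ->]]].
    + by right; split=> //; rr.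
    + by right; split=> //; rr.
    + L2 (G, k) (q3, k); [exact: tsG|exact: sGA|rr|rr].
  - case/inv_q3: hs => [[-> ->]|[-> ->]].
    + L2 (q3', 3 * n) (pj', 3 * n); [exact: ts_refl|exact: sq3'A|rr|rr].
    + L2 (q3', 3 * n) (t1, 3 * n); [exact: ts_refl|exact: sq3'T|rr|rr].
have TR : forall P Q, S Q P -> forall l P', step P l P' ->
   (exists Q'' Q', tau_star Q Q'' /\ step Q'' l Q' /\ R P Q'' /\ R P' Q') \/ (l = tau N /\ R P' Q).
  move=> [x k] [y k'] hS0 l P'; move: (hS0); rewrite {1}/S.
  case=> [hB|[E|[[d [hP hQ]]|[[[-> ->] HQ]|[[[-> ->] /= ->]|[[/= -> /= ->]|[[[-> ->] [-> ->]]|[[[-> ->] HQ]|[[[-> ->] /= ->]|[[/= -> /= ->]|[[-> ->] [-> ->]]]]]]]]]]]]; move=> hs.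
  - have [[Q'' [Q' [a1 [a2 [a3 a4]]]]]|[a1 a2]] := BR0 _ _ hB _ _ hs.
      by L2 Q'' Q'; [exact a1|exact a2|rr|rr].
    by right; split=> //; rr.
  - by apply: (TL _ _ _ _ _ hs); rewrite /S -E; right; left.
  - by apply: (TL _ _ _ _ _ hs); rewrite /S; right; right; left; exists d.
  - move: hs; case: HQ => [[-> ->]| /= ->] hs.
    + case/inv_pi': hs => [-> ->]; by right; split=> //; rr.
    + case/inv_G': hs => [[-> ->]|[[-> ->]|[-> [k0 [_ ->]]]]].
      * L2 (G', k) (q1', k); [exact: ts_step (sPiT n) (tsG' n k)|exact: sG'A|rr|rr].
      * by right; split=> //; rr.
      * by right; split=> //; rr.
  - case/inv_G': hs => [[-> ->]|[[-> ->]|[-> [k0 [_ ->]]]]].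
    + L2 (G', k) (q1', k); [exact: ts_step (sPi'T n) (tsG' n k)|exact: sG'A|rr|rr].
    + by right; split=> //; rr.
    + by right; split=> //; rr.
  - by apply: (TL _ _ _ _ _ hs); rewrite /S; do 5 right; left.
  - case/inv_q1': hs => [[-> ->]|[-> ->]].
    + L2 (q1, n) (q2, n); [exact: ts_refl|exact: sq1A|rr|rr].
    + L2 (q1, n) (t3, n); [exact: ts_refl|exact: sq1T|rr|rr].
  - move: hs; case: HQ => [[-> ->]| /= ->] hs.
    + case/inv_q2': hs => [[-> ->]|[-> ->]].
      * by right; split=> //; rr.
      * L2 (G, 3 * n) (q3, 3 * n); [exact: ts_step (sq2T n) (tsG n (3 * n))|exact: sGA|rr|rr].
    + case/inv_G: hs => [[-> ->]|[[-> [k0 [_ ->]]]|[-> ->]]].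
      * by right; split=> //; rr.
      * by right; split=> //; rr.
      * L2 (G, k) (q3, k); [exact: ts_step (sq2T n) (tsG n k)|exact: sGA|rr|rr].
  - case/inv_G: hs => [[-> ->]|[[-> [k0 [_ ->]]]|[-> ->]]].
    + by right; split=> //; rr.
    + by right; split=> //; rr.
    + L2 (G, k) (q3, k); [exact: ts_step (sq2'T _) (tsG _ k)|exact: sGA|rr|rr].
  - by apply: (TL _ _ _ _ _ hs); rewrite /S; do 9 right; left.
  - case/inv_q3': hs => [[-> ->]|[-> ->]].
    + L2 (q3, 3 * n) (pj, 3 * n); [exact: ts_refl|exact: sq3A|rr|rr].
    + L2 (q3, 3 * n) (t1, 3 * n); [exact: ts_refl|exact: sq3T|rr|rr].
have TT : bb_transfer R by move=> P Q [hS0|hS0] l P' hs; [exact: TL | exact: TR].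
exists R; split; last by rr.
split=> //.
move=> P Q HR l P' hs.
case: (TT P Q (Rsym _ _ HR) l P' hs) => [[Q'' [Q' [a1 [a2 [a3 a4]]]]]|[a1 a2]].
  by left; exists Q'', Q'; do !split=> //; apply: Rsym.
by right; split=> //; apply: Rsym.
Qed.
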